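(* Let $G=(V,E)$ be a finite connected graph with $n$ vertices and edges $e_1,\dots,e_m$, each edge given an orientation, and let $h=m-n+1$. Let $\partial:\mathbb{R}^E\to\mathbb{R}^V$ be the boundary map $e\mapsto \partial^+(e)-\partial^-(e)$ (head minus tail), so that $H_1(G,\mathbb{Z})=\ker(\partial)\cap\mathbb{Z}^E$ is free of rank $h$. Fix a $\mathbb{Z}$-basis $\gamma_1,\dots,\gamma_h$ of $H_1(G,\mathbb{Z})$ and let $M$ be the $h\times m$ real matrix whose $i$-th row is the coordinate vector of $\gamma_i$ in the standard basis $e_1,\dots,e_m$ of $\mathbb{R}^E$. Let $\mathbf{p}\in\mathbb{R}^V$ be a nonzero vector whose coordinates sum to $0$, let $\omega\in\mathbb{R}^E$ with $\partial(\omega)=\mathbf{p}$, and let $N$ be the $(h+1)\times m$ matrix whose rows are the coordinate vectors of $\gamma_1,\dots,\gamma_h,\omega$. Let $U$ be a topological space, $y_1,\dots,y_m:U\to\mathbb{R}_{>0}$ continuous functions, and $Y=\mathrm{diag}(y_1,\dots,y_m)$. Let $A:U\to\mathrm{Mat}_{m\times m}(\mathbb{R})$ be a map such that (i) there is $C>0$ with all entries of $A(s)$ in $[-C,C]$ for all $s\in U$, and (ii) the matrices $M(Y+A)M^\tau$ and $N(Y+A)N^\tau$ are invertible at every point of $U$. Then $$\frac{\det(N(Y+A)N^\tau)}{\det(M(Y+A)M^\tau)}-\frac{\det(NYN^\tau)}{\det(MYM^\tau)}=O_{\underline y}(1).$$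
   Context: Notation: for real functions $F_1,F_2$ on $U$, $F_1=O_{\underline y}(F_2)$ means there exist constants $c,C'>0$ such that $|F_1(s)|\le c|F_2(s)|$ for all $s\in U$ with $y_1(s),\dots,y_m(s)\ge C'$. All matrices are evaluated pointwise at $s\in U$; $X^\tau$ denotes the transpose. *)

(* Defs.v *)
From HB Require Import structures.
From mathcomp Require Import all_boot all_order all_algebra.
From mathcomp Require Import all_classical all_reals all_analysis.
Set Implicit Arguments. Unset Strict Implicit. Unset Printing Implicit Defensive.
Import Order.TTheory GRing.Theory Num.Theory.
Local Open Scope ring_scope.

(* An oriented (multi)graph with vertex set 'I_n and edge set 'I_m:
   edge e goes from tail (tl e) to head (hd e). *)

(* Matrix of the boundary map R^E -> R^V acting on row vectors:
   (x *m bdmx hd tl) v = sum_e x_e ([hd e = v] - [tl e = v]). *)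
Definition bdmx (R : nzRingType) (n m : nat) (hd tl : 'I_m -> 'I_n)
  : 'M[R]_(m, n) :=
  \matrix_(e < m, v < n) ((hd e == v)%:R - (tl e == v)%:R).

Definition adj (n m : nat) (hd tl : 'I_m -> 'I_n) : rel 'I_n :=
  fun u v => [exists e, ((hd e == u) && (tl e == v))
                        || ((tl e == u) && (hd e == v))].

Definition connected_graph (n m : nat) (hd tl : 'I_m -> 'I_n) : Prop :=
  forall u v : 'I_n, connect (adj hd tl) u v.

Definition is_H1_Zbasis (n m h : nat) (hd tl : 'I_m -> 'I_n)
  (g : 'M[int]_(h, m)) : Prop :=
  g *m bdmx int hd tl = 0 /\
  forall x : 'rV[int]_m, x *m bdmx int hd tl = 0 ->
    exists! c : 'rV[int]_h, x = c *m g.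

Definition cycmx (R : nzRingType) (h m : nat) (g : 'M[int]_(h, m))
  : 'M[R]_(h, m) := map_mx (fun z : int => z%:~R) g.

Definition Nmx (R : nzRingType) (h m : nat) (g : 'M[int]_(h, m))
  (w : 'rV[R]_m) : 'M[R]_(h + 1, m) := col_mx (cycmx R g) w.

Definition Ymx (R : nzRingType) (U : Type) (m : nat) (y : 'I_m -> U -> R)
  (s : U) : 'M[R]_m := diag_mx (\row_i y i s).

(* Main.v *)
Require Import Defs.
From HB Require Import structures.
From mathcomp Require Import all_boot all_order all_algebra.
From mathcomp Require Import all_classical all_reals all_analysis.
From mathcomp Require Import ring lra.
Import Order.TTheory GRing.Theory Num.Theory numFieldNormedType.Exports.
Local Open Scope ring_scope.
Set Implicit Arguments. Unset Strict Implicit. Unset Printing Implicit Defensive.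


Lemma schur (R : fieldType) h (P : 'M[R]_h) (Q : 'M[R]_(h, 1)) (Rr : 'M[R]_(1, h)) (S : 'M[R]_1) :
  P \in unitmx -> \det (block_mx P Q Rr S) = \det P * (S - Rr *m invmx P *m Q) 0 0.
Proof.
move=> uP.
have -> : block_mx P Q Rr S = block_mx 1%:M 0 (Rr *m invmx P) 1%:M
   *m block_mx P Q 0 (S - Rr *m invmx P *m Q).
  rewrite mulmx_block !mul1mx !mul0mx !addr0.
  by rewrite -mulmxA mulVmx // mulmx1 addrC subrK.
by rewrite det_mulmx det_lblock det_ublock !det1 !mul1r det_mx11.
Qed.

Lemma ratio_id (R : fieldType) h m (M : 'M[R]_(h,m)) (w : 'rV[R]_m) (c : 'rV[R]_h) (X : 'M[R]_m)
  (u : 'rV[R]_m) : u = w + c *m M ->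
  (M *m X *m M^T) \in unitmx ->
  \det (col_mx M w *m X *m (col_mx M w)^T) / \det (M *m X *m M^T)
  = (u *m X *m u^T - u *m X *m M^T *m invmx (M *m X *m M^T) *m (M *m X *m u^T)) 0 0.
Proof.
move=> Hu uG.
have E : col_mx M w = block_mx 1%:M 0 (- c) 1%:M *m col_mx M u.
  by rewrite mul_block_col !mul1mx mul0mx addr0 Hu mulNmx addrCA addNr addr0.
rewrite E trmx_mul !mulmxA det_mulmx -!mulmxA det_mulmx det_tr det_lblock !det1 !mul1r mulr1.
rewrite !mulmxA tr_col_mx mul_col_mx mul_col_row schur //.
rewrite mulrC mulKf; last by rewrite -unitfE -unitmxE.
by rewrite !mulmxA.
Qed.
Section Flow.
Variables (R : realFieldType) (n m : nat) (hd tl : 'I_m -> 'I_n) (yv : 'I_m -> R) (u : 'rV[R]_m).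
Hypothesis Hy : forall f, 0 < yv f.
Hypothesis Horth : forall γ : 'rV[int]_m, γ *m bdmx int hd tl = 0 ->
   \sum_f yv f * u 0 f * (γ 0 f)%:~R = 0.

Definition frel : rel 'I_n := fun a b => [exists f, ((tl f == a) && (hd f == b) && (0 < u 0 f))
   || ((hd f == a) && (tl f == b) && (u 0 f < 0))].
Definition dE (f : 'I_m) : 'rV[int]_m := delta_mx 0 f.
Definition dV (v : 'I_n) : 'rV[int]_n := delta_mx 0 v.
Definition En (γ : 'rV[int]_m) := \sum_f yv f * u 0 f * (γ 0 f)%:~R.

Lemma En_add g1 g2 : En (g1 + g2) = En g1 + En g2.
Proof. by rewrite /En -big_split; apply: eq_bigr => f _; rewrite mxE intrD mulrDr. Qed.
Lemma En_opp g : En (- g) = - En g.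
Proof. by rewrite /En -sumrN; apply: eq_bigr => f _; rewrite mxE intrN mulrN. Qed.
Lemma En0 : En 0 = 0.
Proof. by rewrite /En big1 // => f _; rewrite mxE mulr0. Qed.
Lemma En_delta f : En (dE f) = yv f * u 0 f.
Proof.
rewrite /En (bigD1 f) //= big1 ?addr0; first by rewrite mxE !eqxx mulr1.
by move=> j /negPf Hj; rewrite mxE Hj andbF mulr0.
Qed.
Lemma delta_bd f : dE f *m bdmx int hd tl = dV (hd f) - dV (tl f).
Proof. by rewrite /dE /dV -rowE; apply/rowP => v; rewrite !mxE ![_ == hd f]eq_sym ![_ == tl f]eq_sym. Qed.

Lemma walk x p : path frel x p -> exists γ, γ *m bdmx int hd tl = dV (last x p) - dV x
   /\ 0 <= En γ /\ (p != [::] -> 0 < En γ).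
Proof.
elim: p x => [|b p IH] x /=.
  by move=> _; exists 0; rewrite mul0mx subrr En0.
case/andP => /existsP [f Hf] /IH [γ [Hγ [H0 _]]].
case/orP: Hf => /andP[/andP[/eqP Ht /eqP Hh] Hu].
  exists (γ + dE f); rewrite mulmxDl Hγ delta_bd Ht Hh addrA subrK En_add En_delta.
  have := mulr_gt0 (Hy f) Hu; split => //; split => //; lra.
exists (γ - dE f); rewrite mulmxBl Hγ delta_bd Ht Hh opprB addrA subrK En_add En_opp En_delta.
have : 0 < yv f * - u 0 f by rewrite mulr_gt0 // oppr_gt0.
rewrite mulrN => H; split => //; split => //; lra.
Qed.

Lemma not_back a b : frel a b -> ~~ connect frel b a.
Proof.
move=> Hab; apply/negP => /connectP [p Hp Hlast].
have [|γ [Hγ [_ Hpos]]] := @walk a (b :: p); first by rewrite /= Hab.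
move: Hγ; rewrite /= -Hlast subrr => /Horth; rewrite -/(En γ) => H.
by move: (Hpos isT); rewrite H ltxx.
Qed.

Lemma cut_term_ge0 b f : 0 <= u 0 f * ((connect frel b (hd f))%:R - (connect frel b (tl f))%:R).
Proof.
case Sh: (connect frel b (hd f)); case St: (connect frel b (tl f)) => /=.
- by rewrite subrr mulr0.
- rewrite subr0 mulr1; rewrite leNgt; apply/negP => Hneg.
  have Hr : frel (hd f) (tl f) by apply/existsP; exists f; rewrite !eqxx Hneg orbT.
  by move: St; rewrite (connect_trans Sh (connect1 Hr)).
- rewrite sub0r mulrN1 oppr_ge0 leNgt; apply/negP => Hpos.
  have Hr : frel (tl f) (hd f) by apply/existsP; exists f; rewrite !eqxx Hpos.
  by move: Sh; rewrite (connect_trans St (connect1 Hr)).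
- by rewrite subrr mulr0.
Qed.

Lemma cut_sum b : \sum_f u 0 f * ((connect frel b (hd f))%:R - (connect frel b (tl f))%:R)
   <= \sum_v `|(u *m bdmx R hd tl) 0 v|.
Proof.
set S := connect frel b.
have E : \sum_v (S v)%:R * (u *m bdmx R hd tl) 0 v
       = \sum_f u 0 f * ((S (hd f))%:R - (S (tl f))%:R).
  under eq_bigr do rewrite mxE big_distrr.
  rewrite exchange_big; apply: eq_bigr => f _ /=.
  under eq_bigr do rewrite mulrCA.
  rewrite -big_distrr /=; congr (_ * _).
  under eq_bigr do rewrite mxE mulrBr.
  rewrite sumrB; congr (_ - _).
    rewrite (bigD1 (hd f)) //= eqxx mulr1 big1 ?addr0 // => v /negPf Hv.
    by rewrite eq_sym Hv mulr0.
  rewrite (bigD1 (tl f)) //= eqxx mulr1 big1 ?addr0 // => v /negPf Hv.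
  by rewrite eq_sym Hv mulr0.
rewrite -E; apply: ler_sum => v _; case: (S v).
  by rewrite mul1r ler_norm.
by rewrite mul0r normr_ge0.
Qed.

Lemma flow_bound e : `|u 0 e| <= \sum_v `|(u *m bdmx R hd tl) 0 v|.
Proof.
have Hs : forall b, 0 <= \sum_(f | f != e)
   u 0 f * ((connect frel b (hd f))%:R - (connect frel b (tl f))%:R).
  by move=> b; apply: sumr_ge0 => f _; apply: cut_term_ge0.
case: ltrgt0P => H.
- have Hab : frel (tl e) (hd e) by apply/existsP; exists e; rewrite !eqxx H.
  have Nb := not_back Hab.
  apply: le_trans (cut_sum (hd e)); rewrite (bigD1 e) //= connect0 (negPf Nb) /=.
  have := Hs (hd e); lra.
- have Hab : frel (hd e) (tl e) by apply/existsP; exists e; rewrite !eqxx H orbT.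
  have Nb := not_back Hab.
  apply: le_trans (cut_sum (tl e)); rewrite (bigD1 e) //= connect0 (negPf Nb) /=.
  have := Hs (tl e); lra.
- by apply: sumr_ge0.
Qed.
End Flow.

Lemma mxbound (R : realFieldType) p q r (A : 'M[R]_(p,q)) (B : 'M[R]_(q,r)) a b :
  (forall i k, `|A i k| <= a) -> (forall k j, `|B k j| <= b) ->
  forall i j, `|(A *m B) i j| <= q%:R * a * b.
Proof.
move=> HA HB i j; rewrite mxE; apply: le_trans (ler_norm_sum _ _ _) _.
apply: le_trans (_ : _ <= \sum_(k < q) a * b) _.
  by apply: ler_sum => k _; rewrite normrM; apply: ler_pM.
by rewrite sumr_const card_ord -mulrA mulr_natl.
Qed.

Lemma le_entry_sum (R : realDomainType) p q (A : 'M[R]_(p,q)) i j :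
  `|A i j| <= \sum_i' \sum_j' `|A i' j'|.
Proof.
rewrite (bigD1 i) //= (bigD1 j) //= -addrA lerDl addr_ge0 //.
  by apply: sumr_ge0 => *.
by apply: sumr_ge0 => *; apply: sumr_ge0 => *.
Qed.

Lemma quad_diag (R : comNzRingType) k (z : 'rV[R]_k) d :
  (z *m diag_mx d *m z^T) 0 0 = \sum_e d 0 e * z 0 e ^+ 2.
Proof.
rewrite mul_mx_diag mxE; apply: eq_bigr => e _; rewrite !mxE; ring.
Qed.

Lemma quad_bound (R : realFieldType) k (z : 'rV[R]_k) (A : 'M[R]_k) C :
  (forall i j, `|A i j| <= C) ->
  `|(z *m A *m z^T) 0 0| <= C * (\sum_e `|z 0 e|) ^+ 2.
Proof.
move=> HA.
have -> : (z *m A *m z^T) 0 0 = \sum_j \sum_i z 0 i * A i j * z 0 j.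
  by rewrite mxE; apply: eq_bigr => j _; rewrite !mxE big_distrl.
apply: le_trans (ler_norm_sum _ _ _) _.
apply: le_trans (_ : _ <= \sum_j \sum_i C * (`|z 0 i| * `|z 0 j|)) _.
  apply: ler_sum => j _; apply: le_trans (ler_norm_sum _ _ _) _.
  apply: ler_sum => i _; rewrite !normrM.
  rewrite -mulrA [C * _]mulrCA; apply: ler_wpM2l => //.
  by apply: ler_wpM2r.
rewrite exchange_big /= expr2 big_distrlr /= big_distrr /=.
apply: ler_sum => i _; rewrite big_distrr /=; by apply: ler_sum.
Qed.

Lemma sumabs_sq (R : realFieldType) k (z : 'rV[R]_k) :
  (\sum_e `|z 0 e|) ^+ 2 <= k%:R * \sum_e z 0 e ^+ 2.
Proof.
rewrite expr2 big_distrl /=.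
apply: le_trans (_ : _ <= \sum_i \sum_j (z 0 i ^+ 2 + z 0 j ^+ 2) / 2) _.
  apply: ler_sum => i _; rewrite big_distrr; apply: ler_sum => j _ /=.
  rewrite -(real_normK (num_real (z 0 i))) -(real_normK (num_real (z 0 j))).
  have := sqr_ge0 (`|z 0 i| - `|z 0 j|); rewrite sqrrB.
  rewrite ler_pdivlMr // mulr_natr addrAC subr_ge0 => H.
  by rewrite (le_trans _ H).
set Z := \sum_e z 0 e ^+ 2.
have -> : \sum_i \sum_j (z 0 i ^+ 2 + z 0 j ^+ 2) / 2 = \sum_i (z 0 i ^+ 2 *+ k + Z) / 2.
  by apply: eq_bigr => i _; rewrite -big_distrl /= big_split /= sumr_const card_ord.
rewrite -big_distrl /= big_split /= sumr_const card_ord sumrMnl -/Z.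
by rewrite -mulr2n -[Z *+ k *+ 2]mulr_natr mulfK ?pnatr_eq0 // mulr_natl.
Qed.

Lemma unit_of_ker (F : fieldType) k (G : 'M[F]_k) :
  (forall r : 'rV_k, r *m G = 0 -> r = 0) -> G \in unitmx.
Proof.
move=> H; rewrite -row_free_unit -kermx_eq0; apply/eqP/row_matrixP => i.
by rewrite row0; apply: H; rewrite -row_mul mulmx_ker row0.
Qed.


Lemma bd_map (R : realType) n m (hd tl : 'I_m -> 'I_n) :
  bdmx R hd tl = map_mx (fun z : int => z%:~R) (bdmx int hd tl).
Proof. by apply/matrixP => i j; rewrite !mxE intrB !natz. Qed.

Lemma ar1 (R : realFieldType) (C m Z S Ys Q : R) : 0 <= C -> S^+2 <= m * Z ->
  `|Q| <= C * S^+2 -> (C * m + 1) * Z <= Ys -> Z <= Ys + Q.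
Proof.
move=> C0 HSZ HQ HY; have h1 := ler_wpM2l C0 HSZ; have h2 := ler_norm (- Q).
rewrite normrN in h2; lra.
Qed.

Lemma ar2 (R : realFieldType) (S Z m k : R) : 0 <= S -> 0 <= m -> 0 <= k ->
  S^+2 <= m * Z -> Z <= k * S -> S <= m * k.
Proof.
move=> S0 m0 k0 H1 H2; have h3 := ler_wpM2l m0 H2.
have H : S * S <= m * k * S by rewrite -expr2 -mulrA; apply: le_trans H1 h3.
rewrite le0r in S0; case/orP: S0 => [/eqP->|Sp]; first by rewrite mulr_ge0.
by rewrite -(ler_pM2r Sp).
Qed.

Lemma ar3 (R : realFieldType) (x y T1 T2 : R) : `|x| <= T1 -> `|y| <= T2 ->
  `|x - y| <= (T1 + T2 + 1) * 1.
Proof. move=> h1 h2; have := ler_normB x y; lra. Qed.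

Lemma ar4 (R : realFieldType) (a b : R) : 0 <= a -> 0 <= b -> 0 < a + b + 1.
Proof. move=> *; lra. Qed.

Lemma row_bound (R : realFieldType) k l (z : 'rV[R]_k) (P : 'M[R]_(k,l)) pi :
  (forall e i, `|P e i| <= pi) -> forall i, `|(z *m P) 0 i| <= (\sum_e `|z 0 e|) * pi.
Proof.
move=> HP i; rewrite mxE; apply: le_trans (ler_norm_sum _ _ _) _.
rewrite big_distrl /=; apply: ler_sum => e _; rewrite normrM.
by apply: ler_wpM2l.
Qed.

Theorem theorem1p1 (R : realType) (n m : nat) (hd tl : 'I_m -> 'I_n)
  (Hconn : connected_graph hd tl)
  (g : 'M[int]_((m + 1 - n)%N, m)) (Hg : is_H1_Zbasis hd tl g)
  (p : 'rV[R]_n) (Hp0 : p != 0) (Hpsum : \sum_(v < n) p 0 v = 0)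
  (w : 'rV[R]_m) (Hw : w *m bdmx R hd tl = p)
  (U : topologicalType) (y : 'I_m -> U -> R)
  (Hycont : forall i, continuous (y i)) (Hypos : forall i s, 0 < y i s)
  (A : U -> 'M[R]_m)
  (HA : exists C : R, 0 < C /\ forall s i j, `|A s i j| <= C)
  (HinvM : forall s, (cycmx R g *m (Ymx y s + A s) *m (cycmx R g)^T) \in unitmx)
  (HinvN : forall s, (Nmx g w *m (Ymx y s + A s) *m (Nmx g w)^T) \in unitmx) :
  exists c C' : R, 0 < c /\ 0 < C' /\
    forall s : U, (forall i, C' <= y i s) ->
      `| \det (Nmx g w *m (Ymx y s + A s) *m (Nmx g w)^T)
           / \det (cycmx R g *m (Ymx y s + A s) *m (cycmx R g)^T)
         - \det (Nmx g w *m Ymx y s *m (Nmx g w)^T)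
           / \det (cycmx R g *m Ymx y s *m (cycmx R g)^T) | <= c * 1.
Proof.
case: (pselect (exists s : U, True)) => [[s0 _]|nU]; last first.
  exists 1, 1; split => //; split => // s; exfalso; apply: nU; by exists s.
rewrite /Nmx.
set h := (m + 1 - n)%N.
set M := cycmx R g.
have HMB : M *m bdmx R hd tl = 0.
  by rewrite bd_map /M /cycmx -map_mxM (proj1 Hg) map_mx0.
have [P MP] : exists P : 'M[R]_(m, h), M *m P = 1%:M.
  exists ((Ymx y s0 + A s0) *m M^T *m invmx (M *m (Ymx y s0 + A s0) *m M^T)).
  by rewrite !mulmxA mulmxV // HinvM.
have [C [C0 HC]] := HA.
pose K := \sum_v `|p 0 v|.
pose mu := \sum_i \sum_j `|M i j|.
pose pi := \sum_i \sum_j `|P i j|.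
have K0 : 0 <= K by apply: sumr_ge0.
have mu0 : 0 <= mu by apply: sumr_ge0 => *; apply: sumr_ge0.
have pi0 : 0 <= pi by apply: sumr_ge0 => *; apply: sumr_ge0.
have HMmu : forall i j, `|M i j| <= mu := le_entry_sum M.
have HPpi : forall i j, `|P i j| <= pi := le_entry_sum P.
have HMTmu : forall i j, `|M^T i j| <= mu by move=> i j; rewrite mxE.
pose beta := m%:R * (m%:R * K * C) * mu.
pose betaa := m%:R * (m%:R * mu * C) * K.
pose rho := pi * (m%:R * (h%:R * beta * pi)).
pose T1 := m%:R * (m%:R * K * C) * K.
pose T2 := h%:R * rho * betaa.
have beta0 : 0 <= beta by rewrite /beta !mulr_ge0 // ltW.
have betaa0 : 0 <= betaa by rewrite /betaa !mulr_ge0 // ltW.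
have T10 : 0 <= T1 by rewrite /T1 !mulr_ge0 // ltW.
have T20 : 0 <= T2 by rewrite /T2 /rho !mulr_ge0 // ltW.
exists (T1 + T2 + 1), (C * m%:R + 1).
split; first exact: ar4 T10 T20.
split; first by have := ar4 (mulr_ge0 (ltW C0) (ler0n _ m)) (lexx 0); rewrite addr0.
move=> s Hys.
set Y := Ymx y s.
set X := Y + A s.
set G := M *m Y *m M^T.
have Hys0 : forall e, 0 < y e s := fun e => Hypos e s.
have quadY : forall z : 'rV[R]_m, (z *m Y *m z^T) 0 0 = \sum_e y e s * z 0 e ^+ 2.
  by move=> z; rewrite /Y /Ymx quad_diag; apply: eq_bigr => e _; rewrite mxE.
have rMP : forall r : 'rV[R]_h, r = (r *m M) *m P by move=> r; rewrite -mulmxA MP mulmx1.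
have uG : G \in unitmx.
  apply: unit_of_ker => r Hr.
  have : (r *m G *m r^T) 0 0 = 0 by rewrite Hr mul0mx mxE.
  rewrite /G !mulmxA -[_ *m M^T *m r^T]mulmxA -trmx_mul quadY => Hs.
  have Hz : forall e, (r *m M) 0 e = 0.
    move=> e.
    have Hnn : forall i : 'I_m, true -> 0 <= y i s * (r *m M) 0 i ^+ 2.
      by move=> i _; rewrite mulr_ge0 // ?sqr_ge0 // ltW.
    have := psumr_eq0P Hnn Hs (i := e) isT.
    by move/eqP; rewrite mulf_eq0 (gt_eqF (Hys0 e)) /= sqrf_eq0 => /eqP.
  rewrite (rMP r); have -> : r *m M = 0 by apply/rowP => e; rewrite Hz mxE.
  by rewrite mul0mx.
set c := - (w *m Y *m M^T *m invmx G).
set u := w + c *m M.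
have uYM : u *m Y *m M^T = 0.
  rewrite /u !mulmxDl.
  have -> : c *m M *m Y *m M^T = c *m G by rewrite /G !mulmxA.
  by rewrite /c mulNmx mulmxKV // addrN.
have MYu : M *m Y *m u^T = 0.
  by move: (congr1 trmx uYM); rewrite !trmx_mul trmxK /Y /Ymx tr_diag_mx trmx0 mulmxA.
have uB : u *m bdmx R hd tl = p by rewrite /u mulmxDl Hw -mulmxA HMB mulmx0 addr0.
have Horth : forall γ : 'rV[int]_m, γ *m bdmx int hd tl = 0 ->
    \sum_f y f s * u 0 f * (γ 0 f)%:~R = 0.
  move=> γ /(proj2 Hg) [k [-> _]].
  have -> : \sum_f y f s * u 0 f * ((k *m g) 0 f)%:~R
      = (u *m Y *m (map_mx (fun z : int => z%:~R) (k *m g))^T) 0 0.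
    rewrite mxE; apply: eq_bigr => f _; rewrite /Y /Ymx mul_mx_diag !mxE.
    by rewrite [y f s * _]mulrC.
  by rewrite map_mxM trmx_mul mulmxA -/M uYM mul0mx mxE.
have Hu : forall e, `|u 0 e| <= K.
  by move=> e; have := @flow_bound R n m hd tl (fun f => y f s) u Hys0 Horth e; rewrite uB.
have Hu' : forall i k, `|u i k| <= K by move=> i k; rewrite (ord1 i).
have Hu'' : forall k j, `|u^T k j| <= K by move=> k j; rewrite mxE (ord1 j).
rewrite (@ratio_id R h m M w c X u erefl (HinvM s)).
rewrite (@ratio_id R h m M w c Y u erefl uG).
rewrite uYM !mul0mx subr0.
have E1 : u *m X *m u^T = u *m Y *m u^T + u *m A s *m u^T by rewrite /X mulmxDr mulmxDl.
have E2 : u *m X *m M^T = u *m A s *m M^T by rewrite /X mulmxDr mulmxDl uYM add0r.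
have E3 : M *m X *m u^T = M *m A s *m u^T by rewrite /X mulmxDr mulmxDl MYu add0r.
rewrite E1 E2 E3.
have Ediff : forall (P1 P2 P3 : 'M[R]_1), (P1 + P2 - P3) 0 0 - P1 0 0 = P2 0 0 - P3 0 0.
  by move=> P1 P2 P3; rewrite !mxE; lra.
rewrite Ediff.
set b := u *m A s *m M^T.
set a := M *m A s *m u^T.
set GX := M *m X *m M^T.
have B1 : `|(u *m A s *m u^T) 0 0| <= T1 := mxbound (mxbound Hu' (HC s)) Hu'' 0 0.
have Hb : forall i j, `|b i j| <= beta := mxbound (mxbound Hu' (HC s)) HMTmu.
have Ha : forall i j, `|a i j| <= betaa := mxbound (mxbound HMmu (HC s)) Hu''.
set r := b *m invmx GX.
have Hr : forall i j, `|r i j| <= rho.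
  set z := r *m M.
  have rz : r = z *m P by rewrite /z -rMP.
  have HrG : r *m GX = b by rewrite /r mulmxKV // HinvM.
  have Eq : (z *m X *m z^T) 0 0 = (b *m r^T) 0 0.
    by rewrite -HrG /GX /z trmx_mul !mulmxA.
  have S0 : 0 <= \sum_e `|z 0 e| by apply: sumr_ge0.
  have HSZ := sumabs_sq z.
  have Hlow : \sum_e z 0 e ^+ 2 <= (z *m X *m z^T) 0 0.
    rewrite /X mulmxDr mulmxDl mxE quadY.
    apply: (ar1 (ltW C0) HSZ (quad_bound z (HC s))).
    rewrite big_distrr /=; apply: ler_sum => e _; apply: ler_wpM2r => //.
    exact: sqr_ge0.
  have Hri : forall i, `|r 0 i| <= (\sum_e `|z 0 e|) * pi.
    by move=> i; rewrite rz; apply: row_bound.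
  have HrT : forall k j, `|r^T k j| <= (\sum_e `|z 0 e|) * pi.
    by move=> k j; rewrite mxE (ord1 j).
  have Hup : \sum_e z 0 e ^+ 2 <= (h%:R * beta * pi) * \sum_e `|z 0 e|.
    apply: le_trans Hlow _; rewrite Eq; apply: le_trans (ler_norm _) _.
    apply: le_trans (mxbound Hb HrT 0 0) _.
    by rewrite [_ * pi]mulrC !mulrA.
  have k0 : 0 <= h%:R * beta * pi.
    by rewrite !mulr_ge0 // ltW.
  have HS := ar2 S0 (ler0n _ m) k0 HSZ Hup.
  move=> i j; rewrite (ord1 i); apply: le_trans (Hri j) _.
  by rewrite /rho mulrC -subr_ge0 -mulrBr mulr_ge0 // subr_ge0.
have B2 : `|(r *m a) 0 0| <= T2 := mxbound Hr Ha 0 0.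
exact: ar3 B1 B2.
Qed.
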